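(* Let $A\in\mathbb{R}^{n\times n}$, $B\in\mathbb{R}^{n\times m}$, $C\in\mathbb{R}^{p\times n}$ with $(A,C)$ observable, $\ell$ its observability index, and $\mathbf{A}_\ell,\mathbf{B}_\ell,Z_\ell$ as in the context. For each $\hat x\in\mathbb{R}^n$ and each sequence $\{u(k)\}_{k=0}^\infty$ there exists $\hat\xi$ such that the solution $x(\cdot)$ of $x^+=Ax+Bu$ with $x(0)=\hat x$, its output $y(\cdot)=Cx(\cdot)$, and the solution $\xi(\cdot)$ of $\xi^+=\mathbf{A}_\ell\xi+\mathbf{B}_\ell v$ with $\xi(\ell)=\hat\xi$ and input $v(k)=u(k)$ for $k\ge\ell$ satisfy, for all $k\ge\ell$, $\xi(k)=(y(k-\ell),\dots,y(k-1),u(k-\ell),\dots,u(k-1))$ and $y(k)=Z_\ell\xi(k)$.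
   Context: $(v_1,\dots,v_r)$ denotes a stacked column vector. The observability index $\ell$ is the smallest $l$ with $\operatorname{rank}[C;CA;\dots;CA^{l-1}]=n$. Define $\mathcal{O}_\ell=[C;CA;\dots;CA^{\ell-1}]$; $\mathcal{T}_\ell\in\mathbb{R}^{p\ell\times m\ell}$ block lower triangular with $(i,j)$ block $CA^{i-j-1}B$ if $i>j$ and $0$ otherwise; $\mathcal{R}_\ell=[A^{\ell-1}B\ \cdots\ AB\ B]$; $\mathcal{O}_\ell^{L}$ a fixed left inverse of $\mathcal{O}_\ell$. $\mathbf{F}_\ell=\mathrm{blockdiag}(S_p,S_m)$ where $S_q\in\mathbb{R}^{q\ell\times q\ell}$ has blocks $I_q$ at block positions $(i,i+1)$, $i=1,\dots,\ell-1$, zeros elsewhere; $\mathbf{L}_\ell\in\mathbb{R}^{(p\ell+m\ell)\times p}$ has $I_p$ in rows $p\ell-p+1,\dots,p\ell$, zeros elsewhere; $\mathbf{B}_\ell\in\mathbb{R}^{(p\ell+m\ell)\times m}$ has $I_m$ in its last $m$ rows, zeros elsewhere. $Z_\ell=[CA^\ell\mathcal{O}_\ell^L\ \ C\mathcal{R}_\ell-CA^\ell\mathcal{O}_\ell^L\mathcal{T}_\ell]$, $\mathbf{A}_\ell=\mathbf{F}_\ell+\mathbf{L}_\ell Z_\ell$. *)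

(* Defs.v *)
From HB Require Import structures.
From mathcomp Require Import all_boot all_order all_algebra.
Set Implicit Arguments. Unset Strict Implicit. Unset Printing Implicit Defensive.
Import Order.TTheory GRing.Theory Num.Theory.
Local Open Scope ring_scope.

Section Defs.
Variable R : realFieldType.

(* Entry access of a matrix by natural-number indices (0 if out of range). *)
Definition nat_entry (a b : nat) (M : 'M[R]_(a, b)) (i j : nat) : R :=
  match @insub _ (fun k => k < a)%N 'I_a i, @insub _ (fun k => k < b)%N 'I_b j with
  | Some i', Some j' => M i' j'
  | _, _ => 0
  end.

Variables (n m p : nat).

(* Observability matrix O_l = [C; CA; ...; CA^(l-1)] : (p*l) x n.
   Row r lies in block r %/ p, at position r %% p inside the block. *)
Definition obs_mx (l : nat) (A : 'M[R]_n) (C : 'M[R]_(p, n)) : 'M[R]_(p * l, n) :=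
  \matrix_(i, j) nat_entry (C *m A ^+ (i %/ p)) (i %% p) j.

Definition is_obs_index (A : 'M[R]_n) (C : 'M[R]_(p, n)) (l : nat) : Prop :=
  \rank (obs_mx l A C) = n /\ (forall l', (l' < l)%N -> (\rank (obs_mx l' A C) < n)%N).

Definition observable (A : 'M[R]_n) (C : 'M[R]_(p, n)) : Prop :=
  \rank (obs_mx n A C) = n.

(* T_l : block lower triangular, (i,j) block = C A^(i-j-1) B if i > j, else 0. *)
Definition toep_mx (l : nat) (A : 'M[R]_n) (B : 'M[R]_(n, m)) (C : 'M[R]_(p, n))
  : 'M[R]_(p * l, m * l) :=
  \matrix_(i, j)
    if (j %/ m < i %/ p)%N
    then nat_entry (C *m A ^+ (i %/ p - j %/ m).-1 *m B) (i %% p) (j %% m)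
    else 0.

(* R_l = [A^(l-1)B ... AB B] : n x (m*l). *)
Definition reach_mx (l : nat) (A : 'M[R]_n) (B : 'M[R]_(n, m)) : 'M[R]_(n, m * l) :=
  \matrix_(i, j) nat_entry (A ^+ (l - (j %/ m).+1) *m B) i (j %% m).

(* S_q : (q*l) x (q*l), identity blocks at block positions (i, i+1). *)
Definition shift_mx (q l : nat) : 'M[R]_(q * l) :=
  \matrix_(i, j) ((((i %/ q).+1 == j %/ q) && (i %% q == j %% q))%N)%:R.

(* E : (q*l) x q with I_q in its last q rows. *)
Definition last_block_mx (q l : nat) : 'M[R]_(q * l, q) :=
  \matrix_(i, j) (((i %/ q == l.-1) && (i %% q == j))%N)%:R.

Definition F_mx (l : nat) : 'M[R]_(p * l + m * l) :=
  block_mx (shift_mx p l) 0 0 (shift_mx m l).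

Definition L_mx (l : nat) : 'M[R]_(p * l + m * l, p) :=
  col_mx (last_block_mx p l) 0.

Definition B_mx (l : nat) : 'M[R]_(p * l + m * l, m) :=
  col_mx 0 (last_block_mx m l).

Definition Z_mx (l : nat) (A : 'M[R]_n) (B : 'M[R]_(n, m)) (C : 'M[R]_(p, n))
  (OL : 'M[R]_(n, p * l)) : 'M[R]_(p, p * l + m * l) :=
  row_mx (C *m A ^+ l *m OL)
         (C *m reach_mx l A B - C *m A ^+ l *m OL *m toep_mx l A B C).

Definition A_mx (l : nat) (A : 'M[R]_n) (B : 'M[R]_(n, m)) (C : 'M[R]_(p, n))
  (OL : 'M[R]_(n, p * l)) : 'M[R]_(p * l + m * l) :=
  F_mx l + L_mx l *m Z_mx A B C OL.

(* Stacked vector (y(k-l), ..., y(k-1), u(k-l), ..., u(k-1)). *)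
Definition past_window (l k : nat) (y : nat -> 'cV[R]_p) (u : nat -> 'cV[R]_m)
  : 'cV[R]_(p * l + m * l) :=
  col_mx (\col_i nat_entry (y (k - l + i %/ p)%N) (i %% p) 0)
         (\col_i nat_entry (u (k - l + i %/ m)%N) (i %% m) 0).

End Defs.

(* Main.v *)
Require Import Defs.
From HB Require Import structures.
From mathcomp Require Import all_boot all_order all_algebra.
Import Order.TTheory GRing.Theory Num.Theory.
Local Open Scope ring_scope.
Set Implicit Arguments. Unset Strict Implicit. Unset Printing Implicit Defensive.

Section Helpers.
Variable R : realFieldType.
Lemma nat_entry_out a b (M : 'M[R]_(a,b)) i j : (a <= i)%N || (b <= j)%N -> nat_entry M i j = 0.
Proof.
rewrite /nat_entry; case: insubP => [i' Hi <-|//]; case: insubP => [j' Hj <-|//].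
by rewrite leqNgt ltn_ord /= leqNgt ltn_ord.
Qed.

Lemma nat_entry_in a b (M : 'M[R]_(a,b)) i j (Hi : (i < a)%N) (Hj : (j < b)%N) :
  nat_entry M i j = M (Ordinal Hi) (Ordinal Hj).
Proof. by rewrite /nat_entry (insubT (fun k => k < a)%N Hi) (insubT (fun k => k < b)%N Hj). Qed.

Lemma nat_entry_mx a b (E : nat -> nat -> R) i j :
  nat_entry (\matrix_(i0 < a, j0 < b) E i0 j0) i j = if (i < a)%N && (j < b)%N then E i j else 0.
Proof.
case: (ltnP i a) => Hi; last by rewrite nat_entry_out ?Hi.
case: (ltnP j b) => Hj; last by rewrite nat_entry_out ?Hj ?orbT.
by rewrite (nat_entry_in _ Hi Hj) mxE.
Qed.

Lemma nat_entry_mul a b c (M : 'M[R]_(a,b)) (N : 'M[R]_(b,c)) i j :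
  nat_entry (M *m N) i j = \sum_(0 <= k < b) nat_entry M i k * nat_entry N k j.
Proof.
case: (ltnP i a) => Hi; last first.
  rewrite nat_entry_out ?Hi // big1 // => k _.
  by rewrite (@nat_entry_out _ _ M) ?Hi ?mul0r.
case: (ltnP j c) => Hj; last first.
  rewrite nat_entry_out ?Hj ?orbT // big1 // => k _.
  by rewrite (@nat_entry_out _ _ N) ?Hj ?orbT ?mulr0.
rewrite (nat_entry_in _ Hi Hj) mxE big_mkord.
apply: eq_bigr => k _; rewrite (nat_entry_in _ Hi (ltn_ord k)) (nat_entry_in _ (ltn_ord k) Hj).
by have -> : Ordinal (ltn_ord k) = k by apply: val_inj.
Qed.

Lemma nat_entryD a b (M N : 'M[R]_(a,b)) i j :
  nat_entry (M + N) i j = nat_entry M i j + nat_entry N i j.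
Proof.
case: (ltnP i a) => Hi; last by rewrite !nat_entry_out ?Hi ?addr0.
case: (ltnP j b) => Hj; last by rewrite !nat_entry_out ?Hj ?orbT ?addr0.
by rewrite !(nat_entry_in _ Hi Hj) mxE.
Qed.

Lemma nat_entry0 a b i j : nat_entry (0 : 'M[R]_(a,b)) i j = 0.
Proof.
case: (ltnP i a) => Hi; last by rewrite !nat_entry_out ?Hi.
case: (ltnP j b) => Hj; last by rewrite !nat_entry_out ?Hj ?orbT.
by rewrite !(nat_entry_in _ Hi Hj) mxE.
Qed.

Lemma nat_entry_sum a b q (M : nat -> 'M[R]_(a,b)) i j :
  nat_entry (\sum_(0 <= t < q) M t) i j = \sum_(0 <= t < q) nat_entry (M t) i j.
Proof.
elim: q => [|q IH]; first by rewrite !big_nil nat_entry0.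
by rewrite !big_nat_recr //= nat_entryD IH.
Qed.

Lemma cV_eq a (v w : 'cV[R]_a) : (forall r, (r < a)%N -> nat_entry v r 0 = nat_entry w r 0) -> v = w.
Proof.
move=> H; apply/matrixP => i j; rewrite (ord1 j).
have := H i (ltn_ord i); rewrite !(nat_entry_in _ (ltn_ord i) (ltn0Sn 0)).
by have -> : Ordinal (ltn_ord i) = i by apply: val_inj.
Qed.
Lemma sum_split (F : nat -> R) a l :
  \sum_(0 <= j < a * l) F j = \sum_(0 <= t < l) \sum_(0 <= c < a) F (t * a + c)%N.
Proof.
elim: l => [|l IH]; first by rewrite muln0 !big_nil.
Timeout 10 rewrite mulnS addnC (big_cat_nat _ (leq_addr _ _)) //= IH big_nat_recr //=; congr (_ + _).
Timeout 10 rewrite -{1}[(a * l)%N]add0n big_addn.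
rewrite addKn.
Timeout 10 apply: eq_bigr => c _.
by rewrite addnC mulnC.
Qed.

Lemma pick_sum N a (G : nat -> R) :
  \sum_(0 <= t < N) ((t == a)%:R * G t) = if (a < N)%N then G a else 0.
Proof.
elim: N => [|N IH]; first by rewrite big_nil.
rewrite big_nat_recr //= IH.
case: (ltngtP a N) => H.
- by rewrite (ltn_trans H (ltnSn N)) mul0r addr0.
- by rewrite ltnNge H mul0r addr0.
- by rewrite H ltnSn mul1r add0r.
Qed.
End Helpers.


Section Main.
Variables (R : realFieldType) (n m p : nat) (A : 'M[R]_n) (B : 'M[R]_(n,m)) (C : 'M[R]_(p,n)).

Lemma col_entry a (E : nat -> R) r : (r < a)%N -> nat_entry (\col_(i < a) E i) r 0 = E r.
Proof. by move=> Hr; rewrite (@nat_entry_mx R a 1 (fun i _ => E i) r 0) Hr. Qed.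

Lemma reach_entry l r j : (r < n)%N -> (j < m * l)%N ->
  nat_entry (reach_mx l A B) r j = nat_entry (A ^+ (l - (j %/ m).+1) *m B) r (j %% m).
Proof. by move=> Hr Hj; rewrite /reach_mx (@nat_entry_mx R n (m * l) (fun i j => nat_entry (A ^+ (l - (j %/ m).+1) *m B) i (j %% m))) Hr Hj. Qed.

Lemma obs_entry l i k : (i < p * l)%N -> (k < n)%N ->
  nat_entry (obs_mx l A C) i k = nat_entry (C *m A ^+ (i %/ p)) (i %% p) k.
Proof. by move=> Hr Hj; rewrite /obs_mx (@nat_entry_mx R (p * l) n (fun i j => nat_entry (C *m A ^+ (i %/ p)) (i %% p) j)) Hr Hj. Qed.

Lemma toep_entry l i j : (i < p * l)%N -> (j < m * l)%N ->
  nat_entry (toep_mx l A B C) i j = if (j %/ m < i %/ p)%N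
    then nat_entry (C *m A ^+ (i %/ p - j %/ m).-1 *m B) (i %% p) (j %% m) else 0.
Proof. by move=> Hr Hj; rewrite /toep_mx (@nat_entry_mx R (p * l) (m * l) (fun i j => if (j %/ m < i %/ p)%N then nat_entry (C *m A ^+ (i %/ p - j %/ m).-1 *m B) (i %% p) (j %% m) else 0)) Hr Hj. Qed.

Lemma shift_entry q l i j : (i < q * l)%N -> (j < q * l)%N ->
  nat_entry (shift_mx R q l) i j = ((((i %/ q).+1 == j %/ q) && (i %% q == j %% q))%N)%:R.
Proof. by move=> Hr Hj; rewrite /shift_mx (@nat_entry_mx R (q * l) (q * l) (fun i j => ((((i %/ q).+1 == j %/ q) && (i %% q == j %% q))%N)%:R)) Hr Hj. Qed.

Lemma last_entry q l i j : (i < q * l)%N -> (j < q)%N ->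
  nat_entry (last_block_mx R q l) i j = (((i %/ q == l.-1) && (i %% q == j))%N)%:R.
Proof. by move=> Hr Hj; rewrite /last_block_mx (@nat_entry_mx R (q * l) q (fun i j => (((i %/ q == l.-1) && (i %% q == j))%N)%:R)) Hr Hj. Qed.

Lemma divmod_small d t c : (c < d)%N -> ((t * d + c) %/ d = t)%N /\ ((t * d + c) %% d = c)%N.
Proof.
move=> Hc; have d0 : (0 < d)%N by apply: leq_ltn_trans Hc.
by rewrite divnMDl // divn_small // addn0 modnMDl modn_small.
Qed.

Lemma AexpS (M : 'M[R]_n) q : M *m M ^+ q = M ^+ q.+1.
Proof. by rewrite exprS mulmxE. Qed.

Lemma traj (u : nat -> 'cV[R]_m) (x : nat -> 'cV[R]_n) :
  (forall k, x k.+1 = A *m x k + B *m u k) ->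
  forall s q, x (s + q)%N = A ^+ q *m x s + \sum_(0 <= t < q) A ^+ (q - t.+1) *m B *m u (s + t)%N.
Proof.
move=> Hx s; elim=> [|q IH]; first by rewrite addn0 expr0 mul1mx big_nil addr0.
rewrite addnS Hx IH mulmxDr mulmxA AexpS big_nat_recr //= subnn expr0 mul1mx addrA.
congr (_ + _ + _).
rewrite mulmx_sumr; apply: eq_big_nat => t /andP[_ Ht].
by rewrite !mulmxA AexpS subSn.
Qed.

Lemma reach_win (u : nat -> 'cV[R]_m) (x : nat -> 'cV[R]_n) :
  (forall k, x k.+1 = A *m x k + B *m u k) -> forall s l,
  A ^+ l *m x s + reach_mx l A B *m (\col_(i < m * l) nat_entry (u (s + i %/ m)%N) (i %% m) 0)
  = x (s + l)%N.
Proof.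
move=> Hx s l; rewrite (traj Hx); congr (_ + _); apply: cV_eq => r Hr.
rewrite nat_entry_mul nat_entry_sum.
transitivity (\sum_(0 <= j < m * l) nat_entry (A ^+ (l - (j %/ m).+1) *m B) r (j %% m)
   * nat_entry (u (s + j %/ m)%N) (j %% m) 0).
  by apply: eq_big_nat => j /andP[_ Hj]; rewrite reach_entry // (@col_entry (m * l) (fun i => nat_entry (u (s + i %/ m)%N) (i %% m) 0)).
rewrite sum_split; apply: eq_big_nat => t /andP[_ Ht].
rewrite nat_entry_mul; apply: eq_big_nat => c /andP[_ Hc].
by case: (divmod_small t Hc) => -> ->.
Qed.

Lemma obs_win (u : nat -> 'cV[R]_m) (x : nat -> 'cV[R]_n) :
  (forall k, x k.+1 = A *m x k + B *m u k) -> forall s l,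
  \col_(i < p * l) nat_entry (C *m x (s + i %/ p)%N) (i %% p) 0 =
  obs_mx l A C *m x s + toep_mx l A B C *m (\col_(i < m * l) nat_entry (u (s + i %/ m)%N) (i %% m) 0).
Proof.
move=> Hx s l; apply: cV_eq => i Hi.
rewrite (@col_entry (p * l) (fun i => nat_entry (C *m x (s + i %/ p)%N) (i %% p) 0)) //.
have p0 : (0 < p)%N by move: Hi; case: (p) => //; rewrite mul0n.
have Hq : (i %/ p < l)%N by rewrite ltn_divLR // mulnC.
have Hr : (i %% p < p)%N by rewrite ltn_pmod.
rewrite (traj Hx) mulmxDr !nat_entryD; congr (_ + _).
  rewrite mulmxA !nat_entry_mul; apply: eq_big_nat => k /andP[_ Hk].
  by rewrite obs_entry.
rewrite mulmx_sumr nat_entry_sum !nat_entry_mul.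
transitivity (\sum_(0 <= j < m * l) (if (j %/ m < i %/ p)%N then
   nat_entry (C *m A ^+ (i %/ p - j %/ m).-1 *m B) (i %% p) (j %% m) else 0)
   * nat_entry (u (s + j %/ m)%N) (j %% m) 0); last first.
  apply: eq_big_nat => j /andP[_ Hj].
  by rewrite toep_entry // (@col_entry (m * l) (fun i => nat_entry (u (s + i %/ m)%N) (i %% m) 0)).
rewrite sum_split [in RHS](big_cat_nat _ (n := i %/ p)) //= ?(ltnW Hq) //.
rewrite [X in _ = _ + X](_ : _ = 0) ?addr0; last first.
  rewrite big_nat_cond big1 // => t /andP[/andP[Hqt _] _].
  rewrite big_nat_cond big1 // => c /andP[/andP[_ Hc] _].
  by case: (divmod_small t Hc) => -> _; rewrite ltnNge Hqt mul0r.
apply: eq_big_nat => t /andP[_ Ht].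
rewrite !mulmxA nat_entry_mul; apply: eq_big_nat => c /andP[_ Hc].
by case: (divmod_small t Hc) => -> ->; rewrite Ht subnS.
Qed.

Lemma pick2 (q a b : nat) (G : nat -> R) (t : nat) : (b < q)%N ->
  \sum_(0 <= c < q) (((a == t) && (b == c))%N)%:R * G c = (t == a)%:R * G b.
Proof.
move=> Hb.
transitivity (\sum_(0 <= c < q) (t == a)%:R * ((c == b)%:R * G c)).
  apply: eq_big_nat => c _; rewrite (eq_sym a) (eq_sym b).
  by case: (t == a); case: (c == b); rewrite /= ?mul0r ?mul1r.
by rewrite -mulr_sumr pick_sum Hb.
Qed.

Lemma shift_win q l (f : nat -> 'cV[R]_q) s :
  \col_(i < q * l) nat_entry (f (s.+1 + i %/ q)%N) (i %% q) 0 =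
  shift_mx R q l *m \col_(i < q * l) nat_entry (f (s + i %/ q)%N) (i %% q) 0
  + last_block_mx R q l *m f (s + l)%N.
Proof.
apply: cV_eq => i Hi.
rewrite (@col_entry (q * l) (fun i => nat_entry (f (s.+1 + i %/ q)%N) (i %% q) 0)) //.
have q0 : (0 < q)%N by move: Hi; case: (q) => //; rewrite mul0n.
have Ha : (i %/ q < l)%N by rewrite ltn_divLR // mulnC.
have Hb : (i %% q < q)%N by rewrite ltn_pmod.
rewrite nat_entryD !nat_entry_mul.
transitivity (\sum_(0 <= j < q * l) ((((i %/ q).+1 == j %/ q) && (i %% q == j %% q))%N)%:R
    * nat_entry (f (s + j %/ q)%N) (j %% q) 0
  + \sum_(0 <= c < q) (((i %/ q == l.-1) && (i %% q == c))%N)%:R * nat_entry (f (s + l)%N) c 0);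
  last first.
  congr (_ + _); apply: eq_big_nat => j /andP[_ Hj].
    by rewrite shift_entry // (@col_entry (q * l) (fun i => nat_entry (f (s + i %/ q)%N) (i %% q) 0)).
  by rewrite last_entry.
rewrite sum_split.
transitivity (\sum_(0 <= t < l) ((t == (i %/ q).+1)%N)%:R * nat_entry (f (s + t)%N) (i %% q) 0
  + ((l.-1 == i %/ q)%N)%:R * nat_entry (f (s + l)%N) (i %% q) 0); last first.
  congr (_ + _); last by rewrite pick2.
  apply: eq_big_nat => t _; rewrite -(@pick2 q (i %/ q).+1 (i %% q) (fun c => nat_entry (f (s + t)%N) c 0) t Hb).
  by apply: eq_big_nat => c /andP[_ Hc]; case: (divmod_small t Hc) => -> ->.
rewrite pick_sum; case: (ltnP (i %/ q).+1 l) => Hal.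
  rewrite (_ : (l.-1 == i %/ q)%N = false) ?mul0r ?addr0 ?addSnnS //.
  by apply/negbTE; move: Hal; case: (l) => // l' /=; rewrite ltnS => /ltn_eqF; rewrite eq_sym => ->.
have El : l = (i %/ q).+1 by apply/eqP; rewrite eqn_leq Hal Ha.
by rewrite El /= eqxx mul1r add0r addSnnS.
Qed.
End Main.


Lemma key (R : realFieldType) (n m p : nat)
  (A : 'M[R]_n) (B : 'M[R]_(n, m)) (C : 'M[R]_(p, n)) (l : nat)
  (OL : 'M[R]_(n, p * l)) (u : nat -> 'cV[R]_m) (x : nat -> 'cV[R]_n) :
  OL *m obs_mx l A C = 1%:M ->
  (forall k, x k.+1 = A *m x k + B *m u k) ->
  forall k, (l <= k)%N ->
  Z_mx A B C OL *m past_window l k (fun j => C *m x j) u = C *m x k.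
Proof.
move=> HOL Hx k Hk; rewrite /past_window /Z_mx mul_row_col.
have E1 : (\col_(i < p * l) nat_entry ((fun j => C *m x j) (k - l + i %/ p)%N) (i %% p) 0)
   = obs_mx l A C *m x (k - l)%N + toep_mx l A B C *m
     (\col_(i < m * l) nat_entry (u (k - l + i %/ m)%N) (i %% m) 0) := obs_win C Hx (k - l) l.
rewrite E1.
set Z1 := C *m A ^+ l *m OL.
rewrite mulmxDr mulmxBl -(mulmxA Z1 _ _) addrCA addrK.
rewrite /Z1 mulmxA -(mulmxA (C *m A ^+ l) OL) HOL mulmx1.
rewrite -!mulmxA -mulmxDr addrC (reach_win Hx) subnK //.
Qed.

Fixpoint xdef (R : realFieldType) n m (A : 'M[R]_n) (B : 'M[R]_(n, m))
  (u : nat -> 'cV[R]_m) (xhat : 'cV[R]_n) (k : nat) : 'cV[R]_n :=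
  if k is k'.+1 then A *m xdef A B u xhat k' + B *m u k' else xhat.

Unset Implicit Arguments.
Set Strict Implicit.

Theorem lemma3 (R : realFieldType) (n m p : nat)
  (A : 'M[R]_n) (B : 'M[R]_(n, m)) (C : 'M[R]_(p, n)) (l : nat)
  (OL : 'M[R]_(n, p * l)) :
  observable A C ->
  is_obs_index A C l ->
  OL *m obs_mx l A C = 1%:M ->
  forall (xhat : 'cV[R]_n) (u : nat -> 'cV[R]_m),
  exists xihat : 'cV[R]_(p * l + m * l),
    forall (x : nat -> 'cV[R]_n) (xi : nat -> 'cV[R]_(p * l + m * l)),
      x 0%N = xhat ->
      (forall k, x k.+1 = A *m x k + B *m u k) ->
      xi l = xihat ->
      (forall k, (l <= k)%N -> xi k.+1 = A_mx A B C OL *m xi k + B_mx R m p l *m u k) ->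
      forall k, (l <= k)%N ->
        xi k = past_window l k (fun j => C *m x j) u /\
        C *m x k = Z_mx A B C OL *m xi k.
Proof.
move=> _ _ HOL xhat u.
exists (past_window l l (fun j => C *m xdef A B u xhat j) u).
move=> x xi Hx0 Hx Hxi0 Hxi.
have Ex : forall j, x j = xdef A B u xhat j by elim=> [|j IH] //=; rewrite Hx IH.
have Hw : forall k, (l <= k)%N -> xi k = past_window l k (fun j => C *m x j) u.
  move=> k Hk; rewrite -(subnK Hk); elim: (k - l)%N => [|d IH].
    rewrite add0n Hxi0 /past_window; congr col_mx; apply/matrixP => i j; by rewrite !mxE Ex.
  rewrite addSn Hxi ?leq_addl // IH /A_mx mulmxDl -mulmxA (key HOL Hx) ?leq_addl //.
  rewrite /past_window /F_mx /L_mx /B_mx mul_block_col mul_col_mx !mul0mx !addr0 !add0r.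
  rewrite add_col_mx ?addr0 ?add0r subSn ?leq_addl // addnK.
  rewrite mul_col_mx mul0mx add_col_mx addr0.
  congr col_mx; [exact: (esym (shift_win l (fun j => C *m x j) d)) | exact: (esym (shift_win l u d))].
move=> k Hk; split; first exact: Hw.
by rewrite Hw // (key HOL Hx).
Qed.
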